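(* Let $k>1$, let $f$ be a positive function on $\mathbb{R}$, differentiable on $[0,1]$, and define $g(R)=\dfrac{k-1}{\frac{k-1}{k}-R}$ for $R\neq\frac{k-1}{k}$. Consider the planar system $$\frac{dI}{d\tau}=I\,[f(R)(1-I-R)-k],\qquad \frac{dR}{d\tau}=(k-1)I-R.$$ If $f(R)>g(R)$ for some $R\in\left[0,\frac{k-1}{k}\right)$, then the system has at least one endemic equilibrium point $(I^*,R^* )$ with $R^*\in\left(R,\frac{k-1}{k}\right)$ and $I^*\in\left(\frac{R}{k-1},\frac1k\right)$. In particular, if $f(0)>k$, there exists at least one endemic equilibrium.
   Context: An endemic equilibrium is an equilibrium point $(I^*,R^* )$ of the system with $I^*>0$. *)

(* Defs.v *)
From Stdlib Require Import Reals.
From Coquelicot Require Import Coquelicot.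
Open Scope R_scope.

Definition g (k r : R) : R := (k - 1) / ((k - 1) / k - r).

Definition dI (f : R -> R) (k I r : R) : R := I * (f r * (1 - I - r) - k).
Definition dR (k I r : R) : R := (k - 1) * I - r.

Definition equilibrium (f : R -> R) (k I r : R) : Prop :=
  dI f k I r = 0 /\ dR k I r = 0.

Definition endemic_equilibrium (f : R -> R) (k I r : R) : Prop :=
  equilibrium f k I r /\ 0 < I.

(* Main.v *)
Require Import Defs.
From Stdlib Require Import Reals Lra Ranalysis5.
From Coquelicot Require Import Coquelicot.
Open Scope R_scope.

Lemma part1 (k : R) (f : R -> R) :
  1 < k ->
  (forall x : R, 0 < f x) ->
  (forall x : R, 0 <= x <= 1 -> ex_derive f x) ->
  (forall r : R, 0 <= r < (k - 1) / k -> f r > g k r ->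
     exists Is Rs : R,
       endemic_equilibrium f k Is Rs /\
       r < Rs < (k - 1) / k /\
       r / (k - 1) < Is < 1 / k).
Proof.
  intros Hk Hf Hd r Hr Hg.
  set (c := (k - 1) / k) in *.
  assert (Hc1 : c < 1) by (unfold c; apply Rmult_lt_reg_r with k; [lra|];
    unfold Rdiv; rewrite Rmult_assoc, Rinv_l; lra).
  assert (Hc0 : 0 < c) by (unfold c; apply Rdiv_lt_0_compat; lra).
  set (h := fun x => (k - 1) - f x * (c - x)).
  assert (Hcont : forall a, r <= a <= c -> continuity_pt h a).
  { intros a Ha. unfold h.
    apply continuity_pt_minus. apply continuity_pt_const; intros u v; reflexivity.
    apply continuity_pt_mult.
    apply continuity_pt_filterlim. apply (ex_derive_continuous (K:=R_AbsRing) (V:=R_NormedModule)). apply Hd; lra.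
    apply continuity_pt_minus. apply continuity_pt_const; intros u v; reflexivity.
    apply continuity_pt_id. }
  assert (Hhr : h r < 0).
  { unfold h. unfold g in Hg. fold c in Hg.
    assert (Hcr : 0 < c - r) by lra.
    apply Rmult_gt_compat_r with (r := c - r) in Hg; [|lra].
    replace ((k - 1) / (c - r) * (c - r)) with (k - 1) in Hg by (field; lra).
    lra. }
  assert (Hhc : 0 < h c) by (unfold h; replace (c - c) with 0 by ring; lra).
  destruct (IVT_interv h r c Hcont ltac:(lra) Hhr Hhc) as [z [Hz Hhz]].
  assert (Hzr : z <> r) by (intro E; subst z; lra).
  assert (Hzc : z <> c) by (intro E; subst z; lra).
  exists (z / (k - 1)), z.
  assert (Hk1 : k - 1 <> 0) by lra.
  split; [split; [split|]|].
  - unfold dI. unfold h in Hhz.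
    assert (E : f z * (1 - z / (k - 1) - z) - k = 0).
    { assert (E1 : 1 - z / (k - 1) - z = (c - z) * (k / (k - 1))) by (unfold c; field; lra).
      rewrite E1. replace (f z * ((c - z) * (k / (k - 1)))) with ((f z * (c - z)) * (k / (k - 1))) by ring.
      replace (f z * (c - z)) with (k - 1) by lra. field; lra. }
    rewrite E; ring.
  - unfold dR; field; lra.
  - apply Rdiv_lt_0_compat; lra.
  - split. split; lra.
    split. unfold Rdiv; apply Rmult_lt_compat_r; [apply Rinv_0_lt_compat|]; lra.
    apply Rmult_lt_reg_r with (k - 1); [lra|].
    replace (z / (k - 1) * (k - 1)) with z by (field; lra).
    replace (1 / k * (k - 1)) with c by (unfold c; field; lra). lra.
Qed.

Theorem theorem2 (k : R) (f : R -> R) :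
  1 < k ->
  (forall x : R, 0 < f x) ->
  (forall x : R, 0 <= x <= 1 -> ex_derive f x) ->
  (forall r : R, 0 <= r < (k - 1) / k -> f r > g k r ->
     exists Is Rs : R,
       endemic_equilibrium f k Is Rs /\
       r < Rs < (k - 1) / k /\
       r / (k - 1) < Is < 1 / k)
  /\
  (f 0 > k -> exists Is Rs : R, endemic_equilibrium f k Is Rs).
Proof.
  intros Hk Hf Hd. split. apply part1; auto.
  intros H0.
  assert (Hc0 : 0 < (k-1)/k) by (apply Rdiv_lt_0_compat; lra).
  destruct (part1 k f Hk Hf Hd 0 ltac:(lra)) as [I [Rs [He _]]].
  { unfold g. replace ((k - 1) / ((k - 1) / k - 0)) with k by (field; lra). exact H0. }
  eauto.
Qed.
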